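(* Let $\mathcal H\subseteq\mathcal S_+^d$ be a well-structured preconditioner set. Then for every $y\in\mathbb R^d$, $$\|y\|_{\mathcal H,*}=\inf_{H\in\mathcal H\cap\mathcal S^d_{++},\ \operatorname{Tr}(H)\le 1}\|y\|_{H,*}=\inf_{H\in\mathcal H\cap\mathcal S^d_{++},\ \operatorname{Tr}(H)\le 1}\|y\|_{H^{-1}},$$ where $\|\cdot\|_{H,*}$ denotes the dual norm of $\|\cdot\|_H$.
   Context: $\mathcal S^d_+$ (resp. $\mathcal S^d_{++}$) denotes the set of real symmetric positive semidefinite (resp. positive definite) $d\times d$ matrices. A set $\mathcal H\subseteq\mathcal S_+^d$ is a well-structured preconditioner set if $\mathcal H=\mathcal S_+^d\cap\mathcal K$ for some set $\mathcal K$ of real $d\times d$ matrices that is closed under scalar multiplication, matrix addition and matrix multiplication and contains the identity $I_d$. For $H\in\mathcal S_+^d$, $\|x\|_H=\sqrt{x^\top Hx}$. The $\mathcal H$-norm is $\|x\|_{\mathcal H}:=\sup_{H\in\mathcal H,\operatorname{Tr}(H)\le 1}\|x\|_H$, and $\|y\|_{\mathcal H,*}:=\sup_{\|x\|_{\mathcal H}\le 1}\langle x,y\rangle$ is its dual norm. *)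

(* Defs.v *)
From HB Require Import structures.
From mathcomp Require Import all_boot all_order all_algebra.
From mathcomp Require Import all_classical all_reals ereal.
Set Implicit Arguments. Unset Strict Implicit. Unset Printing Implicit Defensive.
Import Order.TTheory GRing.Theory Num.Theory.
Local Open Scope ring_scope.
Local Open Scope classical_set_scope.

Section Defs.
Variables (R : realType) (d : nat).

Definition qform (A : 'M[R]_d) (x y : 'cV[R]_d) : R := (x^T *m A *m y) ord0 ord0.
Definition inner (x y : 'cV[R]_d) : R := (x^T *m y) ord0 ord0.

Definition symmetric (A : 'M[R]_d) : Prop := A^T = A.
Definition psd (A : 'M[R]_d) : Prop := symmetric A /\ forall x, 0 <= qform A x x.
Definition pd (A : 'M[R]_d) : Prop := symmetric A /\ forall x, x != 0 -> 0 < qform A x x.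

Definition well_structured (Hs : set 'M[R]_d) : Prop :=
  exists K : set 'M[R]_d,
    [/\ (forall (a : R) A, K A -> K (a *: A)),
        (forall A B, K A -> K B -> K (A + B)),
        (forall A B, K A -> K B -> K (A *m B)),
        K 1%:M &
        Hs = [set A | psd A /\ K A]].

Definition Hnorm (H : 'M[R]_d) (x : 'cV[R]_d) : R := Num.sqrt (qform H x x).

Definition setnorm (Hs : set 'M[R]_d) (x : 'cV[R]_d) : \bar R :=
  ereal_sup [set (Hnorm H x)%:E | H in [set H | Hs H /\ \tr H <= 1]].

Definition setnorm_dual (Hs : set 'M[R]_d) (y : 'cV[R]_d) : \bar R :=
  ereal_sup [set (inner x y)%:E | x in [set x | (setnorm Hs x <= 1)%E]].

Definition Hnorm_dual (H : 'M[R]_d) (y : 'cV[R]_d) : \bar R :=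
  ereal_sup [set (inner x y)%:E | x in [set x | Hnorm H x <= 1]].

Definition admissible (Hs : set 'M[R]_d) : set 'M[R]_d :=
  [set H | [/\ Hs H, pd H & \tr H <= 1]].

End Defs.

(* Main.v *)
Require Import Defs.
From HB Require Import structures.
From mathcomp Require Import all_boot all_order all_algebra.
From mathcomp Require Import all_classical all_reals ereal.
From mathcomp Require Import ring lra.
Import Defs.
Set Implicit Arguments. Unset Strict Implicit.
Import Order.TTheory GRing.Theory Num.Theory.
Local Open Scope ring_scope.
Local Open Scope classical_set_scope.

Lemma innerE (R : realType) d (x y : 'cV[R]_d) :
  inner x y = \sum_i x i 0 * y i 0.
Proof. by rewrite /inner mxE; apply: eq_bigr => i _; rewrite mxE. Qed.

Lemma inner_sym (R : realType) d (x y : 'cV[R]_d) : inner x y = inner y x.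
Proof. by rewrite !innerE; apply: eq_bigr => i _; rewrite mulrC. Qed.

Lemma innerDr (R : realType) d (x y z : 'cV[R]_d) :
  inner x (y + z) = inner x y + inner x z.
Proof. by rewrite !innerE -big_split; apply: eq_bigr => i _; rewrite mxE mulrDr. Qed.

Lemma innerZr (R : realType) d (a : R) (x y : 'cV[R]_d) :
  inner x (a *: y) = a * inner x y.
Proof. by rewrite !innerE mulr_sumr; apply: eq_bigr => i _; rewrite mxE mulrCA. Qed.

Lemma innerNr (R : realType) d (x y : 'cV[R]_d) : inner x (- y) = - inner x y.
Proof. by rewrite -scaleN1r innerZr mulN1r. Qed.

Lemma innerBr (R : realType) d (x y z : 'cV[R]_d) :
  inner x (y - z) = inner x y - inner x z.
Proof. by rewrite innerDr innerNr. Qed.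

Lemma innerDl (R : realType) d (x y z : 'cV[R]_d) :
  inner (y + z) x = inner y x + inner z x.
Proof. by rewrite inner_sym innerDr !(inner_sym x). Qed.

Lemma innerZl (R : realType) d (a : R) (x y : 'cV[R]_d) :
  inner (a *: y) x = a * inner y x.
Proof. by rewrite inner_sym innerZr inner_sym. Qed.

Lemma innerBl (R : realType) d (x y z : 'cV[R]_d) :
  inner (y - z) x = inner y x - inner z x.
Proof. by rewrite inner_sym innerBr !(inner_sym x). Qed.

Lemma inner0r (R : realType) d (x : 'cV[R]_d) : inner x 0 = 0.
Proof. by rewrite innerE big1 // => i _; rewrite mxE mulr0. Qed.

Lemma inner_ge0 (R : realType) d (x : 'cV[R]_d) : 0 <= inner x x.
Proof. by rewrite innerE sumr_ge0 // => i _; rewrite -expr2 sqr_ge0. Qed.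

Lemma inner_eq0 (R : realType) d (x : 'cV[R]_d) : inner x x = 0 -> x = 0.
Proof.
rewrite innerE => /eqP; rewrite psumr_eq0 => [/allP H|i _]; last by rewrite -expr2 sqr_ge0.
apply/matrixP => i j; rewrite (ord1 j) mxE.
by have /(_ (mem_index_enum i))/implyP/(_ isT) := H i; rewrite mulf_eq0 orbb => /eqP.
Qed.

Lemma qformE (R : realType) d (A : 'M[R]_d) x y : qform A x y = inner x (A *m y).
Proof. by rewrite /qform /inner mulmxA. Qed.

Lemma inner_mul (R : realType) d (A : 'M[R]_d) x y :
  inner x (A *m y) = inner (A^T *m x) y.
Proof.
by rewrite /inner trmx_mul trmxK mulmxA.
Qed.

Lemma qform_sym (R : realType) d (A : 'M[R]_d) x y :
  symmetric A -> qform A x y = qform A y x.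
Proof. by move=> sA; rewrite !qformE inner_mul sA inner_sym. Qed.

Lemma qformDr (R : realType) d (A : 'M[R]_d) x y z :
  qform A x (y + z) = qform A x y + qform A x z.
Proof. by rewrite !qformE mulmxDr innerDr. Qed.

Lemma qformZr (R : realType) d (A : 'M[R]_d) (a : R) x y :
  qform A x (a *: y) = a * qform A x y.
Proof. by rewrite !qformE -scalemxAr innerZr. Qed.

Lemma qformBr (R : realType) d (A : 'M[R]_d) x y z :
  qform A x (y - z) = qform A x y - qform A x z.
Proof. by rewrite !qformE mulmxBr innerBr. Qed.

Lemma qformDl (R : realType) d (A : 'M[R]_d) x y z :
  qform A (y + z) x = qform A y x + qform A z x.
Proof. by rewrite !qformE innerDl. Qed.

Lemma qformZl (R : realType) d (A : 'M[R]_d) (a : R) x y :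
  qform A (a *: y) x = a * qform A y x.
Proof. by rewrite !qformE innerZl. Qed.

Lemma qformBl (R : realType) d (A : 'M[R]_d) x y z :
  qform A (y - z) x = qform A y x - qform A z x.
Proof. by rewrite !qformE innerBl. Qed.

Lemma qformDm (R : realType) d (A B : 'M[R]_d) x y :
  qform (A + B) x y = qform A x y + qform B x y.
Proof. by rewrite !qformE mulmxDl innerDr. Qed.

Lemma qformZm (R : realType) d (A : 'M[R]_d) (a : R) x y :
  qform (a *: A) x y = a * qform A x y.
Proof. by rewrite !qformE -scalemxAl innerZr. Qed.

Lemma qformBm (R : realType) d (A B : 'M[R]_d) x y :
  qform (A - B) x y = qform A x y - qform B x y.
Proof. by rewrite !qformE mulmxBl innerBr. Qed.

Lemma qform1 (R : realType) d (x y : 'cV[R]_d) : qform 1%:M x y = inner x y.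
Proof. by rewrite qformE mul1mx. Qed.

Lemma qform_CS (R : realType) d (A : 'M[R]_d) u v :
  symmetric A -> (forall x, 0 <= qform A x x) ->
  qform A u v ^+ 2 <= qform A u u * qform A v v.
Proof.
move=> sA pA.
have key t : 0 <= qform A u u - 2 * t * qform A u v + t ^+ 2 * qform A v v.
  have := pA (u - t *: v).
  rewrite qformBl !qformBr !qformZl !qformZr (qform_sym u v sA).
  suff -> : qform A u u - t * qform A v u - (t * qform A v u - t * (t * qform A v v))
     = qform A u u - 2 * t * qform A v u + t ^+ 2 * qform A v v by [].
  by rewrite expr2; ring.
set a := qform A u u in key *; set b := qform A u v in key *; set c := qform A v v in key *.
have a0 : 0 <= a by apply: pA.
have c0 : 0 <= c by apply: pA.
have [cz|cp] := eqVneq c 0.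
  rewrite cz mulr0.
  have [bz|bn] := eqVneq b 0; first by rewrite bz expr0n.
  have := key ((a + 1) / (2 * b)).
  rewrite cz mulr0 addr0.
  have -> : 2 * ((a + 1) / (2 * b)) * b = a + 1 by field; rewrite bn.
  lra.
have cpos : 0 < c by rewrite lt_def cp c0.
have := key (b / c).
have -> : a - 2 * (b / c) * b + (b / c) ^+ 2 * c = (a * c - b ^+ 2) / c.
  by field; rewrite cp.
by rewrite pmulr_lge0 ?invr_gt0 // subr_ge0.
Qed.

Lemma qform0r (R : realType) d (A : 'M[R]_d) x : qform A x 0 = 0.
Proof. by rewrite qformE mulmx0 inner0r. Qed.

Lemma qform0l (R : realType) d (A : 'M[R]_d) x : qform A 0 x = 0.
Proof. by rewrite qformE inner_sym inner0r. Qed.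

Lemma pd_psd (R : realType) d (H : 'M[R]_d) : pd H -> psd H.
Proof.
case=> sH pH; split => // x; have [->|xn] := eqVneq x 0; first by rewrite qform0r.
exact/ltW/pH.
Qed.

Lemma pd_unit (R : realType) d (H : 'M[R]_d) : pd H -> H \in unitmx.
Proof.
case=> sH pH; rewrite unitmxE unitfE; apply/negP => /det0P [v vn vH].
have x0 : v^T != 0 by apply: contra vn => /eqP; rewrite -trmx0 => /trmx_inj ->.
have := pH _ x0; rewrite qformE.
have -> : H *m v^T = 0 by rewrite -sH -trmx_mul vH trmx0.
by rewrite inner0r ltxx.
Qed.

Lemma inv_sym (R : realType) d (H : 'M[R]_d) : symmetric H -> symmetric (invmx H).
Proof. by move=> sH; rewrite /symmetric trmx_inv sH. Qed.

Lemma fvE (R : realType) d (H : 'M[R]_d) y : pd H ->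
  qform (invmx H) y y = qform H (invmx H *m y) (invmx H *m y).
Proof.
move=> pdH; have uH := pd_unit pdH.
by rewrite [RHS]qformE mulmxA mulmxV // mul1mx qformE inner_sym.
Qed.

Lemma fv_ge0 (R : realType) d (H : 'M[R]_d) y : pd H -> 0 <= qform (invmx H) y y.
Proof. by move=> pdH; rewrite fvE //; case: (pd_psd pdH). Qed.

Lemma Hnorm_dualE (R : realType) d (H : 'M[R]_d) y : pd H ->
  Hnorm_dual H y = (Num.sqrt (qform (invmx H) y y))%:E.
Proof.
move=> pdH; have uH := pd_unit pdH; have [sH pH] := pd_psd pdH.
set z := invmx H *m y.
have Hz : H *m z = y by rewrite /z mulmxA mulmxV // mul1mx.
have fE := fvE y pdH; rewrite -/z in fE.
set f := qform (invmx H) y y in fE *.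
have f0 : 0 <= f by apply: fv_ge0.
apply/le_anti/andP; split.
  apply: ge_ereal_sup => _ [x /= xn <-]; rewrite lee_fin.
  have Hx1 : qform H x x <= 1.
    by move: xn; rewrite /Hnorm -[X in _ <= X]sqrtr1 ler_sqrt.
  have ixy : inner x y = qform H x z by rewrite qformE Hz.
  have cs := qform_CS x z sH pH.
  rewrite ixy; apply: le_trans (ler_norm _) _.
  rewrite -sqrtr_sqr ler_sqrt //; apply: le_trans cs _; rewrite -fE.
  by rewrite ler_piMl // pH.
set s := Num.sqrt f.
have sf : s ^+ 2 = f by rewrite sqr_sqrtr.
apply: ereal_sup_ubound; exists (s^-1 *: z).
  rewrite /= /Hnorm qformZl qformZr -fE -sf.
  have [->|sn] := eqVneq s 0; first by rewrite invr0 !mul0r sqrtr0 ler01.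
  have -> : s^-1 * (s^-1 * s ^+ 2) = 1 by field.
  by rewrite sqrtr1.
rewrite innerZl -{1}Hz -qformE -fE -sf.
have [->|sn] := eqVneq s 0; first by rewrite invr0 !mul0r.
by rewrite expr2 mulKf.
Qed.

Lemma inner_CS (R : realType) d (u v : 'cV[R]_d) :
  inner u v ^+ 2 <= inner u u * inner v v.
Proof.
rewrite -!qform1; apply: qform_CS; first by rewrite /symmetric trmx1.
by move=> x; rewrite qform1 inner_ge0.
Qed.

Lemma inv_pert (R : realType) d (H B : 'M[R]_d) y :
  pd H -> pd B ->
  qform (invmx B) y y = qform (invmx H) y y - qform (B - H) (invmx H *m y) (invmx H *m y)
     + qform (invmx B) ((B - H) *m (invmx H *m y)) ((B - H) *m (invmx H *m y)).
Proof.
move=> pdH pdB; have uH := pd_unit pdH; have uB := pd_unit pdB.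
have [sH _] := pdH; have [sB _] := pdB.
have sD : symmetric (B - H) by rewrite /symmetric linearB /= sH sB.
set D := B - H in sD *; set a := invmx H *m y; set b := invmx B *m y.
set w := D *m a.
have Ha : H *m a = y by rewrite /a mulmxA mulmxV // mul1mx.
have Bb : B *m b = y by rewrite /b mulmxA mulmxV // mul1mx.
have ab : a - b = invmx B *m w.
  have : B *m (a - b) = w by rewrite mulmxBr Bb -Ha -mulmxBl.
  by move=> <-; rewrite mulmxA mulVmx // mul1mx.
have e1 : qform (invmx B) y y = inner y b by rewrite qformE.
have e2 : qform (invmx H) y y = inner y a by rewrite qformE.
have e3 : qform (invmx B) w w = inner w (a - b) by rewrite qformE ab.
have e4 : qform D a a = inner a w by rewrite qformE.
have e5 : inner y a - inner y b = inner b w.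
  by rewrite -innerBr ab inner_mul inv_sym.
have e6 : inner w a = inner b w + inner w (a - b).
  rewrite innerBr inner_sym [inner b w]inner_sym; ring.
rewrite e1 e2 e3 e4 [inner a w]inner_sym e6.
have : inner y b = inner y a - inner b w by rewrite -e5; ring.
move=> ->; ring.
Qed.

Lemma inv_bound (R : realType) d (B : 'M[R]_d) (c : R) w :
  pd B -> 0 < c -> (forall v, c * inner v v <= qform B v v) ->
  qform (invmx B) w w <= inner w w / c.
Proof.
move=> pdB c0 cB; have uB := pd_unit pdB; have [sB pB] := pd_psd pdB.
set v := invmx B *m w.
have Bv : B *m v = w by rewrite /v mulmxA mulmxV // mul1mx.
have pE : qform (invmx B) w w = inner w v by rewrite qformE.
have pE2 : inner w v = qform B v v by rewrite qformE Bv inner_sym.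
rewrite pE; set p := inner w v.
have p0 : 0 <= p by rewrite /p pE2 pB.
have h1 := cB v; rewrite -pE2 -/p in h1.
have h2 := inner_CS w v; rewrite -/p in h2.
have W0 := inner_ge0 w; have V0 := inner_ge0 v.
rewrite ler_pdivlMr //.
have [pz|pp] := eqVneq p 0; first by rewrite pz mul0r.
have ppos : 0 < p by rewrite lt_def pp p0.
have h3 : p ^+ 2 * c <= inner w w * p.
  apply: le_trans (_ : inner w w * inner v v * c <= _); first by rewrite ler_pM2r.
  by rewrite -mulrA ler_wpM2l // mulrC.
by rewrite -(ler_pM2l ppos) mulrA -expr2 [p * _]mulrC.
Qed.

Lemma op_bound (R : realType) d (A : 'M[R]_d) v :
  psd A -> \tr A <= 1 -> inner (A *m v) (A *m v) <= inner v v.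
Proof.
case=> sA pA trA.
set W := inner (A *m v) (A *m v); set q := qform A v v.
have q0 : 0 <= q by apply: pA.
have W0 : 0 <= W by apply: inner_ge0.
have Wq : W <= q.
  have eW : W = \sum_i (qform A (delta_mx i 0) v) ^+ 2.
    rewrite /W innerE; apply: eq_bigr => i _.
    have -> : qform A (delta_mx i 0) v = (A *m v) i 0.
      by rewrite /qform trmx_delta -mulmxA -rowE !mxE.
    by rewrite expr2.
  have ei i : qform A (delta_mx i 0) (delta_mx i 0) = A i i.
    by rewrite /qform trmx_delta -rowE -colE !mxE.
  apply: le_trans (_ : \sum_i A i i * q <= _).
    rewrite eW; apply: ler_sum => i _; rewrite -ei; exact: qform_CS.
  by rewrite -mulr_suml -/(\tr A) ler_piMl.
have h := inner_CS v (A *m v); rewrite -qformE -/q -/W in h.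
have V0 := inner_ge0 v.
apply: (le_trans Wq).
have [qz|qn] := eqVneq q 0; first by rewrite qz.
have qp : 0 < q by rewrite lt_def qn q0.
rewrite -(ler_pM2l qp) -expr2; apply: le_trans h _.
by rewrite [q * _]mulrC ler_wpM2l.
Qed.

Lemma psd_comb (R : realType) d (A B : 'M[R]_d) (s t : R) :
  0 <= s -> 0 <= t -> psd A -> psd B -> psd (s *: A + t *: B).
Proof.
move=> s0 t0 [sA pA] [sB pB]; split.
  by rewrite /symmetric linearD !linearZ /= sA sB.
by move=> x; rewrite qformDm !qformZm addr_ge0 // mulr_ge0.
Qed.

Lemma psd_scalar (R : realType) d (e : R) : 0 <= e -> psd (e%:M : 'M[R]_d).
Proof.
move=> e0; split; first by rewrite /symmetric tr_scalar_mx.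
by move=> x; rewrite -scalemx1 qformZm qform1 mulr_ge0 // inner_ge0.
Qed.

Lemma qform_scalar (R : realType) d (e : R) (x : 'cV[R]_d) :
  qform e%:M x x = e * inner x x.
Proof. by rewrite -scalemx1 qformZm qform1. Qed.

Definition Sset (R : realType) d (Hs : set 'M[R]_d) (e : R) :=
  [set H | [/\ Hs H, \tr H <= 1 & psd (H - e%:M)]].

Lemma Sset_lb (R : realType) d (Hs : set 'M[R]_d) e H (v : 'cV[R]_d) :
  Sset Hs e H -> e * inner v v <= qform H v v.
Proof.
case=> _ _ [_ p]; have := p v.
by rewrite qformBm qform_scalar subr_ge0.
Qed.

Lemma Sset_pd (R : realType) d (Hs : set 'M[R]_d) e H :
  well_structured Hs -> 0 < e -> Sset Hs e H -> pd H.
Proof.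
move=> [K [_ _ _ _ ->]] e0 SH; have [[[sH _] _] _ _] := SH; split => // v vn.
apply: lt_le_trans (Sset_lb v SH); rewrite mulr_gt0 // lt_def inner_ge0 andbT.
by apply: contra vn => /eqP /inner_eq0 ->.
Qed.

Lemma Sset_adm (R : realType) d (Hs : set 'M[R]_d) e H :
  well_structured Hs -> 0 < e -> Sset Hs e H -> admissible Hs H.
Proof. by move=> ws e0 SH; have [? ? _] := SH; split => //; apply: Sset_pd SH. Qed.

Lemma Sset_conv (R : realType) d (Hs : set 'M[R]_d) e H H' (t : R) :
  well_structured Hs -> 0 <= t <= 1 -> Sset Hs e H -> Sset Hs e H' ->
  Sset Hs e (H + t *: (H' - H)).
Proof.
move=> [K [KZ KD _ _ HsE]] /andP[t0 t1] [HH trH pH] [HH' trH' pH'].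
have E : H + t *: (H' - H) = (1 - t) *: H + t *: H'.
  by rewrite scalerBr scalerBl scale1r addrA addrAC.
have t1' : 0 <= 1 - t by rewrite subr_ge0.
rewrite E; split.
- rewrite HsE in HH HH' *; case: HH => pH0 KH; case: HH' => pH0' KH'.
  by split; [apply: psd_comb | apply: KD; apply: KZ].
- rewrite mxtraceD !mxtraceZ.
  apply: le_trans (_ : (1 - t) * 1 + t * 1 <= _); last by rewrite !mulr1 subrK.
  by apply: lerD; apply: ler_wpM2l.
- have -> : (1 - t) *: H + t *: H' - e%:M = (1 - t) *: (H - e%:M) + t *: (H' - e%:M).
    by rewrite !scalerBr addrACA -opprD -scalerDl subrK scale1r.
  exact: psd_comb.
Qed.

Lemma Sset_trans (R : realType) d (Hs : set 'M[R]_d) (e : R) H :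
  well_structured Hs -> 0 < e -> d%:R * e <= 1 -> Hs H -> \tr H <= 1 ->
  Sset Hs e ((1 - d%:R * e) *: H + e%:M).
Proof.
move=> [K [KZ KD _ K1 HsE]] e0 de HH trH.
have c0 : 0 <= 1 - d%:R * e by rewrite subr_ge0.
rewrite HsE in HH; case: HH => pH KH; split.
- rewrite HsE; split.
    by rewrite -[e%:M]scale1r; apply: psd_comb => //; apply: psd_scalar; rewrite ltW.
  by apply: KD; [apply: KZ | rewrite -scalemx1; apply: KZ].
- rewrite mxtraceD mxtraceZ mxtrace_scalar.
  have -> : e *+ d = d%:R * e by rewrite mulr_natl.
  apply: le_trans (_ : (1 - d%:R * e) * 1 + d%:R * e <= _); last by rewrite mulr1 subrK.
  by rewrite lerD2r ler_wpM2l.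
- have -> : (1 - d%:R * e) *: H + e%:M - e%:M = (1 - d%:R * e) *: H + 0 *: H.
    by rewrite scale0r addr0 addrK.
  by apply: psd_comb.
Qed.

Lemma inner_sub_bound (R : realType) d (p q : 'cV[R]_d) :
  inner (p - q) (p - q) <= 2 * inner p p + 2 * inner q q.
Proof.
have h := inner_ge0 (p + q).
rewrite !innerDl !innerDr in h; rewrite !innerBl !innerBr.
rewrite (inner_sym q p) in h *; lra.
Qed.

Lemma z_bound (R : realType) d (Hs : set 'M[R]_d) e H (y : 'cV[R]_d) :
  well_structured Hs -> 0 < e -> Sset Hs e H ->
  inner (invmx H *m y) (invmx H *m y) <= inner y y / e ^+ 2.
Proof.
move=> ws e0 SH; have pdH := Sset_pd ws e0 SH; have uH := pd_unit pdH.
set z := invmx H *m y.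
have Hz : H *m z = y by rewrite /z mulmxA mulmxV // mul1mx.
have h1 := Sset_lb z SH; rewrite qformE Hz in h1.
have h2 := inner_CS z y.
set Z := inner z z in h1 h2 *; set c := inner z y in h1 h2 *; set Y := inner y y in h2 *.
have Z0 : 0 <= Z by apply: inner_ge0.
have e2 : 0 < e ^+ 2 by rewrite exprn_gt0.
rewrite ler_pdivlMr //.
have [Zz|Zn] := eqVneq Z 0; first by rewrite Zz mul0r inner_ge0.
have Zp : 0 < Z by rewrite lt_def Zn Z0.
have : (e * Z) ^+ 2 <= Z * Y.
  apply: le_trans h2; rewrite ler_sqr ?nnegrE //; last by apply: le_trans h1; rewrite mulr_ge0 // ltW.
  by rewrite mulr_ge0 // ltW.
have -> : (e * Z) ^+ 2 = Z * (Z * e ^+ 2) by rewrite expr2; ring.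
by rewrite ler_pM2l.
Qed.

Lemma Hs0 (R : realType) d (Hs : set 'M[R]_d) : well_structured Hs -> Hs 0.
Proof.
move=> [K [KZ _ _ K1 ->]]; split.
  by have := @psd_scalar R d 0 (lexx 0); rewrite -scalemx1 scale0r.
by rewrite -(scale0r (1%:M : 'M[R]_d)); apply: KZ.
Qed.

Lemma local_opt (R : realType) d (Hs : set 'M[R]_d) (y : 'cV[R]_d) (e eta : R) :
  well_structured Hs -> 0 < e -> d%:R * e <= 1 -> 0 < eta ->
  exists H, Sset Hs e H /\ forall H', Sset Hs e H' ->
    qform H' (invmx H *m y) (invmx H *m y) <= qform (invmx H) y y + eta.
Proof.
move=> ws e0 de eta0.
set f := fun H : 'M[R]_d => qform (invmx H) y y.
set E := [set f H | H in Sset Hs e].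
have S0 := Sset_trans ws e0 de (Hs0 ws) (_ : \tr 0 <= 1).
have hE : has_inf E.
  split; first by exists (f ((1 - d%:R * e) *: 0 + e%:M)); exists ((1 - d%:R * e) *: 0 + e%:M) => //; apply: S0; rewrite mxtrace0 ler01.
  by exists 0 => _ [H SH <-]; apply: fv_ge0; apply: Sset_pd SH.
set Y := inner y y.
have Y0 : 0 <= Y by apply: inner_ge0.
set M := 2 * (Y / e ^+ 2) + 2 * Y.
have M0 : 0 <= M by rewrite /M addr_ge0 // mulr_ge0 // divr_ge0 // exprn_ge0 // ltW.
set N := M / e + 1.
have N0 : 0 < N by rewrite /N ltr_wpDl // divr_ge0 // ltW.
set t := eta / (2 * N + eta).
have den0 : 0 < 2 * N + eta by rewrite addr_gt0 // mulr_gt0.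
have t0 : 0 < t by rewrite divr_gt0.
have t1 : t <= 1 by rewrite ler_pdivrMr // mul1r lerDr mulr_ge0 // ltW.
have tN : t * (M / e) <= eta / 2.
  apply: le_trans (_ : t * N <= _); first by rewrite ler_pM2l // lerDl.
  rewrite /t mulrAC ler_pdivrMr // mulrAC ler_pdivlMr //; nra.
set delta := t * eta / 2.
have delta0 : 0 < delta by rewrite divr_gt0 // mulr_gt0.
have [_ [H SH <-] Hlt] := inf_adherent delta0 hE.
exists H; split => // H' SH'.
have pdH := Sset_pd ws e0 SH; have uH := pd_unit pdH.
set z := invmx H *m y.
have Hz : H *m z = y by rewrite /z mulmxA mulmxV // mul1mx.
set B := H + t *: (H' - H).
have SB : Sset Hs e B by apply: Sset_conv => //; rewrite ltW.
have pdB := Sset_pd ws e0 SB.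
have infB : inf E <= f B by apply: ge_inf; [case: hE | exists B].
have DB : B - H = t *: (H' - H) by rewrite /B addrC addKr.
have pert := inv_pert y pdH pdB; rewrite DB -/z -scalemxAl qformZl qformZr qformZm qformBm in pert.
set u := (H' - H) *m z in pert.
have fHE : qform H z z = f H by rewrite /f fvE.
rewrite fHE in pert.
have ub : inner u u <= M.
  have -> : u = H' *m z - y by rewrite /u mulmxBl Hz.
  apply: le_trans (inner_sub_bound _ _) _; rewrite /M lerD2r ler_pM2l //.
  apply: le_trans (z_bound y ws e0 SH).
  have HH' : psd H'.
    by move: ws SH' => [K [_ _ _ _ HsE]] [+ _ _]; rewrite HsE => -[].
  case: SH' => _ trH' _.
  exact: op_bound.
have qb : qform (invmx B) u u <= M / e.
  apply: le_trans (inv_bound u pdB e0 (fun v => Sset_lb v SB)) _.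
  by rewrite ler_pM2r ?invr_gt0.
set q' := qform H' z z in pert *.
have fB : f B = qform (invmx B) y y by [].
rewrite -fB in pert.
have fH' : qform (invmx H) y y = f H by [].
rewrite fH' in pert.
have key : t * (q' - f H) <= t * eta.
  have h1 : t * (q' - f H) <= delta + t * (t * (M / e)).
    have : t * (t * qform (invmx B) u u) <= t * (t * (M / e)) by rewrite !ler_pM2l.
    lra.
  apply: le_trans h1 _.
  have : t * (t * (M / e)) <= t * (eta / 2) by rewrite ler_pM2l.
  rewrite /delta; lra.
by move: key; rewrite ler_pM2l // lerBlDl addrC.
Qed.

Lemma core (R : realType) d (Hs : set 'M[R]_d) (y : 'cV[R]_d) (a b : R) :
  well_structured Hs -> 0 <= b -> b < a ->
  (forall H, admissible Hs H -> a <= qform (invmx H) y y) ->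
  exists x, (setnorm Hs x <= 1)%E /\ 0 <= inner x y /\ b < inner x y ^+ 2.
Proof.
move=> ws b0 ba aH.
have a0 : 0 < a by apply: le_lt_trans ba.
set k := (a - b) / (4 * a).
have k0 : 0 < k by rewrite divr_gt0 ?subr_gt0 // mulr_gt0.
have D0 : 0 < d%:R + 1 :> R by rewrite ltr_wpDl.
set e := k / (d%:R + 1).
have e0 : 0 < e by rewrite divr_gt0.
have dek : d%:R * e <= k.
  by rewrite /e mulrA ler_pdivrMr // mulrDr mulr1 mulrC lerDl ltW.
have k4 : 4 * a * k = a - b by rewrite /k mulrC mulfVK // mulf_neq0 // ?lt0r_neq0.
have de1 : d%:R * e <= 1.
  apply: le_trans dek _; rewrite /k ler_pdivrMr ?mulr_gt0 //; lra.
set eta := (a - b) / 4.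
have eta0 : 0 < eta by rewrite divr_gt0 // subr_gt0.
have [H [SH opt]] := local_opt y ws e0 de1 eta0.
set z := invmx H *m y in opt.
set fH := qform (invmx H) y y in opt.
have fHa : a <= fH by apply: aH; apply: Sset_adm SH.
set c := 1 - d%:R * e.
have c4 : 3 * a + b <= 4 * a * c.
  have : 4 * a * (d%:R * e) <= 4 * a * k by rewrite ler_pM2l // mulr_gt0.
  rewrite k4 /c; lra.
have c0 : 0 < c by rewrite /c subr_gt0; apply: le_lt_trans dek _; rewrite /k ltr_pdivrMr ?mulr_gt0 //; lra.
have fe0 : 0 < fH + eta by rewrite ltr_wpDl // (le_trans (ltW a0)).
have bnd H'' : Hs H'' -> \tr H'' <= 1 -> c * qform H'' z z <= fH + eta.
  move=> HH tr; have := opt _ (Sset_trans ws e0 de1 HH tr).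
  rewrite qformDm qformZm qform_scalar -/c.
  have := inner_ge0 z; have := ltW e0; nra.
set al := Num.sqrt (c / (fH + eta)).
have al0 : 0 <= al by apply: sqrtr_ge0.
have al2 : al ^+ 2 = c / (fH + eta) by rewrite sqr_sqrtr // divr_ge0 // ltW.
exists (al *: z); split; last split.
- apply: ge_ereal_sup => _ [H'' [HH tr] <-]; rewrite lee_fin /Hnorm -sqrtr1 ler_sqrt //.
  rewrite qformZl qformZr mulrA -expr2 al2 mulrAC ler_pdivrMr // mul1r.
  exact: bnd.
- rewrite innerZl mulr_ge0 // inner_sym -qformE; exact: (le_trans (ltW a0)).
- rewrite innerZl inner_sym -qformE -/fH exprMn al2.
  rewrite mulrAC ltr_pdivlMr //.
  have s1 : 3 * a + b <= 4 * (fH - eta) by rewrite /eta; lra.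
  have s2 : (3 * a + b) ^+ 2 <= (4 * a * c) * (4 * (fH - eta)).
    rewrite expr2; apply: ler_pM => //; lra.
  have s3 : 16 * a * b < (3 * a + b) ^+ 2 by nra.
  have s4 : b < c * (fH - eta) by nra.
  have s5 : 0 < fH - eta by rewrite /eta; lra.
  nra.
Qed.

Lemma setnorm0 (R : realType) d (Hs : set 'M[R]_d) : (setnorm Hs 0 <= 1)%E.
Proof.
by apply: ge_ereal_sup => _ [H _ <-]; rewrite lee_fin /Hnorm qform0r sqrtr0 ler01.
Qed.

Lemma inner0l (R : realType) d (y : 'cV[R]_d) : inner 0 y = 0.
Proof. by rewrite inner_sym inner0r. Qed.

Theorem lemma2p1 (R : realType) (d : nat) (Hs : set 'M[R]_d) :
  well_structured Hs ->
  forall y : 'cV[R]_d,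
    setnorm_dual Hs y = ereal_inf [set Hnorm_dual H y | H in admissible Hs] /\
    ereal_inf [set Hnorm_dual H y | H in admissible Hs] =
    ereal_inf [set (Hnorm (invmx H) y)%:E | H in admissible Hs].
Proof.
move=> ws y.
have eqS : [set Hnorm_dual H y | H in admissible Hs] =
           [set (Hnorm (invmx H) y)%:E | H in admissible Hs].
  apply/seteqP; split => _ [H aH <-]; exists H => //; case: aH => _ pdH _;
  by rewrite Hnorm_dualE.
rewrite eqS; split => //.
set D := setnorm_dual Hs y.
have Dle H : admissible Hs H -> (D <= (Hnorm (invmx H) y)%:E)%E.
  move=> aH; have [HH pdH trH] := aH; rewrite -[(Hnorm _ _)%:E]Hnorm_dualE //.
  apply: ge_ereal_sup => _ [x /= xn <-]; apply: ereal_sup_ubound; exists x => //=.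
  rewrite -lee_fin; apply: le_trans xn; apply: ereal_sup_ubound; exists H => //.
have D0 : (0 <= D)%E.
  by apply: ereal_sup_ubound; exists 0; [exact: setnorm0 | rewrite inner0l].
apply/le_anti/andP; split; first by apply: le_ereal_inf_tmp => _ [H aH <-]; apply: Dle.
set I := ereal_inf _.
have Dr : setnorm_dual Hs y = D by [].
case: D D0 Dle Dr => [r| |] // r0 Dle Dr; last by rewrite leey.
have e0 : (0 : R) < (d%:R + 1)^-1 by rewrite invr_gt0 ltr_wpDl.
have de : d%:R * (d%:R + 1)^-1 <= 1 :> R.
  by rewrite ler_pdivrMr ?ltr_wpDl // mul1r lerDl.
have aH0 := Sset_adm ws e0 (Sset_trans ws e0 de (Hs0 ws) (_ : \tr 0 <= 1)).
rewrite mxtrace0 ler01 in aH0; have aH0' := aH0 isT.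
set H0 := (1 - _) *: 0 + _ in aH0'.
rewrite leNgt; apply/negP => rI.
have Ilb H : admissible Hs H -> (I <= (Hnorm (invmx H) y)%:E)%E.
  by move=> aH; apply: ereal_inf_lbound; exists H.
have := Ilb H0 aH0'.
case: I rI Ilb => [i| |] //= ri Ilb _.
have Ii H : admissible Hs H -> i <= Hnorm (invmx H) y.
  by move=> aH; rewrite -lee_fin; apply: Ilb.
rewrite lte_fin in ri; rewrite lee_fin in r0.
have ba : r ^+ 2 < i ^+ 2.
  rewrite ltr_pXn2r // nnegrE //; exact: le_trans (ltW ri).
have aHH : forall H, admissible Hs H -> i ^+ 2 <= qform (invmx H) y y.
  move=> H aH; have := Ii H aH; rewrite /Hnorm => h.
  rewrite -(sqr_sqrtr (fv_ge0 y (let: And3 _ p _ := aH in p))).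
  by rewrite ler_pXn2r ?nnegrE ?sqrtr_ge0 //; apply: le_trans (ltW ri).
have [x [xn [x0 xb]]] := core ws (sqr_ge0 r) ba aHH.
have : ((inner x y)%:E <= r%:E)%E by rewrite -Dr; apply: ereal_sup_ubound; exists x.
rewrite lee_fin => xr.
have : inner x y ^+ 2 <= r ^+ 2 by rewrite ler_pXn2r ?nnegrE.
by rewrite leNgt xb.
Qed.
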